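(* Let $A$ be a sesquiad with canonical map $\rho:A\to R_A$, and let $\rho^*:\operatorname{spec}R_A\to\operatorname{spec}_cA$ send a prime ideal $\mathfrak p$ to the congruence $\{(a,b):\rho(a)-\rho(b)\in\mathfrak p\}$ (the kernel of $A\to R_A/\mathfrak p$). Then the image $\rho^*(\operatorname{Mspec}R_A)$ of the set of maximal ideals meets every non-empty closed subset of $\operatorname{spec}_cA$; in particular so does the image of $\operatorname{spec}R_A$.
   Context: Rings are commutative with $1$; monoids are commutative with $1$ and a zero $0$. A sesquiad is a monoid $A$ with an addition: partially defined sums $\sum_jk_ja_j$ ($k\in\mathbb Z^n$, $n\ge2$) coming from an injective monoid morphism $\varphi:A\to R$ into a ring with $\varphi(0)=0$, a sum being defined exactly when $\sum_jk_j\varphi(a_j)\in\varphi(A)$, then equal to its preimage. The universal ring is $R_A=\mathbb ZA/I(A)$, $I(A)$ generated by the relations expressing the defined sums; $\rho:A\to R_A$ is injective. A congruence on $A$ is an equivalence relation $\mathcal C$ with $A/\mathcal C$ admitting an addition making $A\to A/\mathcal C$ a sesquiad morphism; it is prime if $A/\mathcal C$ is integral ($1\not\sim0$; $af\sim bf\Rightarrow a\sim b$ or $f\sim 0$). $\operatorname{spec}_cA$ is the set of prime congruences with topology generated by $D(a,b)=\{\mathcal C:(a,b)\notin\mathcal C\}$. $\operatorname{Mspec}R$ is the set of maximal ideals. *)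

(* Defs.v *)
From HB Require Import structures.
From mathcomp Require Import all_boot all_order all_algebra.
Set Implicit Arguments. Unset Strict Implicit. Unset Printing Implicit Defensive.
Import GRing.Theory.
Local Open Scope ring_scope.

Record cmonoid0 := CMonoid0 {
  mcar :> Type;
  mmul : mcar -> mcar -> mcar;
  mone : mcar;
  mzero : mcar;
  mmulA : forall x y z, mmul x (mmul y z) = mmul (mmul x y) z;
  mmulC : forall x y, mmul x y = mmul y x;
  mmul1 : forall x, mmul mone x = x;
  mmul0 : forall x, mmul mzero x = mzero
}.

Definition lincomb (A : Type) (R : comPzRingType) (f : A -> R)
  (l : seq (int * A)) : R := \sum_(p <- l) f p.2 *~ p.1.

Definition realizes (A : cmonoid0) (ps : seq (int * A) -> option A)
  (R : comPzRingType) (phi : A -> R) : Prop :=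
  injective phi /\ phi (mone A) = 1 /\
  (forall x y, phi (mmul x y) = phi x * phi y) /\ phi (mzero A) = 0 /\
  forall l : seq (int * A), (2 <= size l)%N ->
    forall b, ps l = Some b <-> lincomb phi l = phi b.

(* A sesquiad: monoid with partially defined sums (on lists of length >= 2;
   values on shorter lists are irrelevant junk) coming from some ring. *)
Record sesquiad := Sesquiad {
  smon :> cmonoid0;
  ssum : seq (int * smon) -> option smon;
  sreal : exists (R : comPzRingType) (phi : smon -> R), realizes ssum phi
}.

Definition sesq_ring_map (A : sesquiad) (R : comPzRingType) (f : A -> R) : Prop :=
  f (mone A) = 1 /\ (forall x y, f (mmul x y) = f x * f y) /\ f (mzero A) = 0 /\
  forall l : seq (int * A), (2 <= size l)%N ->
    forall b, @ssum A l = Some b -> lincomb f l = f b.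

(* rho : A -> R is the universal ring R_A = ZA / I(A) of A, characterized up to
   unique isomorphism by its universal property. *)
Definition universal_ring (A : sesquiad) (R : comPzRingType) (rho : A -> R) : Prop :=
  sesq_ring_map rho /\
  forall (S : comPzRingType) (f : A -> S), sesq_ring_map f ->
    (exists g : {rmorphism R -> S}, forall a, g (rho a) = f a) /\
    (forall g1 g2 : {rmorphism R -> S},
        (forall a, g1 (rho a) = g2 (rho a)) -> forall x, g1 x = g2 x).

(* Congruence: an equivalence relation C such that A/C carries an addition
   (given by an injective monoid map A/C -> R) making A -> A/C a sesquiad
   morphism; composing, this is a sum-respecting monoid map psi : A -> R
   whose kernel is exactly C. *)
Definition congruence (A : sesquiad) (C : A -> A -> Prop) : Prop :=
  (forall a, C a a) /\ (forall a b, C a b -> C b a) /\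
  (forall a b c, C a b -> C b c -> C a c) /\
  exists (R : comPzRingType) (psi : A -> R),
    sesq_ring_map psi /\ forall a b, C a b <-> psi a = psi b.

(* Prime congruence: A/C is integral. *)
Definition prime_congruence (A : sesquiad) (C : A -> A -> Prop) : Prop :=
  congruence C /\ ~ C (mone A) (mzero A) /\
  forall a b f : A, C (mmul a f) (mmul b f) -> C a b \/ C f (mzero A).

Definition Dset (A : sesquiad) (a b : A) (C : A -> A -> Prop) : Prop := ~ C a b.

(* Open sets of the topology on spec_c A generated by the D(a,b): unions of
   finite intersections of D(a,b)'s (empty intersection = spec_c A). *)
Definition specc_open (A : sesquiad) (U : (A -> A -> Prop) -> Prop) : Prop :=
  (forall C, U C -> prime_congruence C) /\
  forall C, U C -> exists (n : nat) (a b : 'I_n -> A),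
    (forall i, Dset (a i) (b i) C) /\
    forall C', prime_congruence C' -> (forall i, Dset (a i) (b i) C') -> U C'.

Definition specc_closed (A : sesquiad) (Z : (A -> A -> Prop) -> Prop) : Prop :=
  (forall C, Z C -> prime_congruence C) /\
  specc_open (fun C => prime_congruence C /\ ~ Z C).

Definition ideal (R : comPzRingType) (I : R -> Prop) : Prop :=
  I 0 /\ (forall x y, I x -> I y -> I (x - y)) /\ (forall r x, I x -> I (r * x)).

Definition prime_ideal (R : comPzRingType) (P : R -> Prop) : Prop :=
  ideal P /\ ~ P 1 /\ forall x y, P (x * y) -> P x \/ P y.

Definition maximal_ideal (R : comPzRingType) (M : R -> Prop) : Prop :=
  ideal M /\ ~ M 1 /\
  forall J : R -> Prop, ideal J -> (forall x, M x -> J x) ->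
    J 1 \/ (forall x, J x -> M x).

Definition rho_star (A : sesquiad) (R : comPzRingType) (rho : A -> R)
  (p : R -> Prop) : A -> A -> Prop := fun a b => p (rho a - rho b).

(* Main.v *)
Require Import Defs.
From HB Require Import structures.
From mathcomp Require Import all_boot all_order all_algebra.
From mathcomp Require Import boolp classical_sets.
From mathcomp Require Import ring_quotient generic_quotient.
From Stdlib Require Import Classical.
Set Implicit Arguments. Unset Strict Implicit. Unset Printing Implicit Defensive.
Import GRing.Theory.
Local Open Scope ring_scope.

Definition nzc (R : comPzRingType) (M : R -> Prop) (HM : ideal M) (H1 : ~ M 1) : Type := R.
HB.instance Definition _ R M HM H1 := GRing.ComPzRing.on (@nzc R M HM H1).
Lemma nzc1 R M HM H1 : (1 : @nzc R M HM H1) != 0.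
Proof. apply/eqP=> h; apply H1; have -> : (1:R) = 0 := h; by case HM. Qed.
HB.instance Definition _ R M HM H1 := GRing.PzSemiRing_isNonZero.Build (@nzc R M HM H1) (@nzc1 R M HM H1).
Definition Mb R M HM H1 : {pred (@nzc R M HM H1)} := fun x => `[< M x >].
Lemma Mb_idealr R M HM H1 : idealr_closed (@Mb R M HM H1).
Proof.
have [M0 [MB MM]] := HM; split.
- by apply/asboolP.
- by apply/negP => /asboolP.
- move=> a u v /asboolP Mu /asboolP Mv; apply/asboolP.
  have -> : a * u + v = a * u - (0 - v) by rewrite sub0r opprK.
  by apply MB; [apply MM| apply MB].
Qed.
HB.instance Definition _ R M HM H1 := isIdealr.Build (@nzc R M HM H1) (@Mb R M HM H1) (@Mb_idealr R M HM H1).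

Local Open Scope quotient_scope.
Lemma quot_exists (R : comPzRingType) (M : R -> Prop) : ideal M -> ~ M 1 ->
  exists (S : comPzRingType) (pi : {rmorphism R -> S}), forall x, pi x = 0 <-> M x.
Proof.
move=> HM H1.
pose Q := {ideal_quot (@Mb R M HM H1)}.
exists Q.
pose pi : {rmorphism R -> Q} := (\pi_Q : {rmorphism nzc HM H1 -> Q}).
exists pi => x.
rewrite /pi /=.
have := @Quotient.idealrBE _ (@Mb R M HM H1) x 0.
rewrite subr0 (rmorph0 (\pi_Q : {rmorphism nzc HM H1 -> Q})) => h.
split.
- by move=> /eqP; rewrite -h => /asboolP.
- by move=> Mx; apply/eqP; rewrite -h; apply/asboolP.
Qed.

Local Close Scope quotient_scope.

Lemma lincomb_morph (A : Type) (R S : comPzRingType) (g : {rmorphism R -> S})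
  (f : A -> R) l : lincomb (fun a => g (f a)) l = g (lincomb f l).
Proof.
rewrite /lincomb raddf_sum; apply: eq_bigr => p _; by rewrite raddfMz.
Qed.

Lemma sesq_comp (A : sesquiad) (R S : comPzRingType) (f : A -> R)
  (g : {rmorphism R -> S}) : sesq_ring_map f -> sesq_ring_map (fun a => g (f a)).
Proof.
move=> [f1 [fM [f0 fs]]]; split; first by rewrite f1 rmorph1.
split; first by move=> x y; rewrite fM rmorphM.
split; first by rewrite f0 rmorph0.
move=> l hl b hb; by rewrite lincomb_morph (fs l hl b hb).
Qed.

Lemma max_prime (R : comPzRingType) (M : R -> Prop) :
  maximal_ideal M -> prime_ideal M.
Proof.
move=> [HM [M1 Mmax]]; split=> //; split=> // x y Mxy.
have [M0 [MB MM]] := HM.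
case: (classic (M x)) => Mx; first by left.
right.
pose J z := exists m r, M m /\ z = m + r * x.
have HJ : ideal J.
  split; first by exists 0, 0; split=> //; rewrite mul0r addr0.
  split.
    move=> a b [m [r [Mm ->]]] [m' [r' [Mm' ->]]].
    exists (m - m'), (r - r'); split; first exact: MB.
    by rewrite mulrBl opprD addrACA.
  move=> r z [m [s [Mm ->]]]; exists (r * m), (r * s); split; first exact: MM.
  by rewrite mulrDr mulrA.
have MJ : forall z, M z -> J z.
  by move=> z Mz; exists z, 0; split=> //; rewrite mul0r addr0.
case: (Mmax J HJ MJ) => [[m [r [Mm e]]] | JM].
- have -> : y = m * y - (0 - r * (x * y)).
    by rewrite sub0r opprK mulrA -mulrDl -e mul1r.
  apply MB; first by rewrite mulrC; apply MM.
  by apply MB => //; apply MM.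
- exfalso; apply: Mx; apply: JM; exists 0, 1; split=> //; by rewrite mul1r add0r.
Qed.

Lemma rho_star_prime (A : sesquiad) (R : comPzRingType) (rho : A -> R)
  (P : R -> Prop) : sesq_ring_map rho -> prime_ideal P ->
  prime_congruence (rho_star rho P).
Proof.
move=> Hrho [HP [P1 Pp]].
have [P0 [PB PM]] := HP.
have [r1 [rM [r0 rs]]] := Hrho.
rewrite /rho_star.
split; last split.
- split; first by move=> a; rewrite subrr.
  split; first by move=> a b h; rewrite -opprB -sub0r; apply PB.
  split.
    move=> a b c h1 h2; have -> : rho a - rho c = (rho a - rho b) - (rho c - rho b).
      by rewrite opprB addrA subrK.
    by apply PB => //; rewrite -opprB -sub0r; apply PB.
  have [S [pi Hpi]] := quot_exists HP P1.
  exists S, (fun a => pi (rho a)); split; first exact: sesq_comp.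
  move=> a b; rewrite -Hpi rmorphB; split => [/eqP|->]; last by rewrite subrr.
  by rewrite subr_eq0 => /eqP.
- by rewrite r1 r0 subr0.
- move=> a b f; rewrite !rM -mulrBl => /Pp [] h; [left | right] => //.
  by rewrite r0 subr0.
Qed.

Lemma exists_max (R : comPzRingType) (P0 : R -> Prop) :
  ideal P0 -> ~ P0 1 -> exists M, maximal_ideal M /\ forall x, P0 x -> M x.
Proof.
move=> HP0 P01.
pose Pr (I : R -> Prop) := ideal I /\ ~ I 1 /\ forall x, P0 x -> I x.
pose T := {I : R -> Prop | Pr I}.
have t0P : Pr P0 by split=> //; split.
pose t0 : T := exist _ P0 t0P.
pose Rl (a b : T) := `[< forall x, sval a x -> sval b x >].
have [t tmax] : exists t, premaximal Rl t.
  apply: (@ZL_preorder T t0 Rl).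
- by move=> a; apply/asboolP.
- by move=> a b c /asboolP h1 /asboolP h2; apply/asboolP => x /h1 /h2.
- move=> Ch Htot.
  case: (classic (exists s, Ch s)) => [[s0 Cs0] | Cne]; last first.
    by exists t0 => s Cs; exfalso; apply: Cne; exists s.
  pose U x := exists s, Ch s /\ sval s x.
  have UP : Pr U.
    split; last split.
    - split; first by exists s0; split=> //; case: (svalP s0) => [[]].
      split.
        move=> x y [s1 [C1 h1]] [s2 [C2 h2]].
        case: (Htot s1 s2 C1 C2) => /asboolP h.
          exists s2; split=> //; case: (svalP s2) => [[_ [hB _]] _]; by apply hB => //; apply: h.
        exists s1; split=> //; case: (svalP s1) => [[_ [hB _]] _]; by apply hB => //; apply: h.
      move=> r x [s [Cs h]]; exists s; split=> //.
      case: (svalP s) => [[_ [_ hM]] _]; exact: hM.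
    - by move=> [s [Cs h]]; case: (svalP s) => [_ [h1 _]]; apply: h1.
    - by move=> x Px; exists s0; split=> //; case: (svalP s0) => [_ [_ h]]; apply: h.
  exists (exist _ U UP) => s Cs; apply/asboolP => x h; by exists s.
exists (sval t); case: (svalP t) => [Ht [Ht1 HtP]]; split=> //.
split=> //; split=> // J HJ tJ.
case: (classic (J 1)) => J1; first by left.
right.
have JP : Pr J by split=> //; split=> // x /HtP /tJ.
have := tmax (exist _ J JP).
have h : Rl t (exist _ J JP) by apply/asboolP.
by move=> /(_ h) /asboolP.
Qed.

Theorem lemma2p1 (A : sesquiad) (R : comPzRingType) (rho : A -> R) :
  universal_ring rho ->
  forall Z : (A -> A -> Prop) -> Prop,
    specc_closed Z -> (exists C, Z C) ->
    (exists M : R -> Prop, maximal_ideal M /\ Z (rho_star rho M)) /\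
    (exists P : R -> Prop, prime_ideal P /\ Z (rho_star rho P)).
Proof.
move=> [Hrho Huniv] Z [ZP [Uprime Uopen]] [C0 ZC0].
have C0P := ZP _ ZC0.
have [[_ [_ [_ [S [psi [Hpsi Hker]]]]]] [C10 _]] := C0P.
have [[g Hg] _] := Huniv S psi Hpsi.
pose P0 x := g x = 0.
have HP0 : ideal P0.
  split; first exact: rmorph0.
  split; first by move=> x y hx hy; rewrite /P0 rmorphB hx hy subr0.
  by move=> r x hx; rewrite /P0 rmorphM hx mulr0.
have P01 : ~ P0 1.
  rewrite /P0 rmorph1 => h; apply: C10; apply/Hker.
  have [p1 [_ [p0 _]]] := Hpsi; by rewrite p1 p0.
have [M [HM P0M]] := exists_max HP0 P01.
have ZM : Z (rho_star rho M).
  case: (classic (Z (rho_star rho M))) => // nZ; exfalso.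
  have [n [a [b [HD Hall]]]] := Uopen _ (conj (rho_star_prime Hrho (max_prime HM)) nZ).
  have hD : forall i, Dset (a i) (b i) C0.
    move=> i h; apply: (HD i); apply: P0M; rewrite /P0 rmorphB !Hg.
    by move/Hker: h => ->; rewrite subrr.
  have [_ nZ0] := Hall C0 C0P hD.
  exact: nZ0.
split; first by exists M.
by exists M; split=> //; apply: max_prime.
Qed.
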